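(* Let $g\geqslant1$ be odd. An element $u\in\mathbb{C}[\alpha,\gamma]$ is a unit modulo $J_g^-$ if and only if $\mathrm{ev}^\pm_j(u)\neq0$ for both signs and all $j=1,\ldots,(g-1)/2$, where $\mathrm{ev}^\pm_j(f)=f\big(\pm4(g-2j),\,0\big)$.
   Context: $\zeta_k^-\in\mathbb{C}[\alpha,\gamma]$: $\zeta^-_i=0$ for $i<0$, $\zeta^-_0=1$, $\zeta^-_{k+1}=\alpha\zeta^-_k-16k^2\zeta^-_{k-1}+2k(k-1)\gamma\zeta^-_{k-2}$ for $k$ odd and $\zeta^-_{k+1}=\alpha\zeta^-_k+2k(k-1)\gamma\zeta^-_{k-2}$ for $k$ even; $J^-_k=(\zeta^-_k,\zeta^-_{k+1},\zeta^-_{k+2})$. (These are the specializations at $\beta=-8$ of $\zeta_{k+1}=\alpha\zeta_k+k^2(\beta+(-1)^k8)\zeta_{k-1}+2k(k-1)\gamma\zeta_{k-2}$.) ''Unit modulo $J_g^-$'' means the image in $\mathbb{C}[\alpha,\gamma]/J_g^-$ is invertible; the maps $\mathrm{ev}^\pm_j$ vanish on $J_g^-$. *)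

(* Defs.v *)
From HB Require Import structures.
From mathcomp Require Import all_boot all_order all_algebra.
From mathcomp Require Import reals complex.
Set Implicit Arguments. Unset Strict Implicit. Unset Printing Implicit Defensive.
Import Order.TTheory GRing.Theory Num.Theory.
Local Open Scope ring_scope.

(* C = complex R for R : realType (i.e. the complex numbers).
   C[alpha,gamma] is modelled as {poly {poly C}}: the inner variable is
   alpha, the outer variable is gamma. *)
Notation CC R := (complex R).
Notation Cag R := {poly {poly (CC R)}}.

Definition alpha (R : realType) : Cag R := ('X : {poly CC R})%:P.
Definition gamma (R : realType) : Cag R := 'X.

Definition eval2 (R : realType) (f : Cag R) (a c : CC R) : CC R :=
  (map_poly (fun q : {poly CC R} => q.[a]) f).[c].

(* triple (zeta_k, zeta_{k-1}, zeta_{k-2}) of the beta = -8 recursion *)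
Fixpoint zeta_triple (R : realType) (k : nat) : Cag R * Cag R * Cag R :=
  match k with
  | 0 => (1, 0, 0)
  | k'.+1 =>
      let: (z, z1, z2) := zeta_triple R k' in
      (alpha R * z
         - (if odd k' then (16 * k' ^ 2)%:R * z1 else 0)
         + (2 * k' * (k' - 1))%:R * gamma R * z2, z, z1)
  end.

Definition zetam (R : realType) (k : nat) : Cag R := (zeta_triple R k).1.1.

Definition unit_mod_J (R : realType) (k : nat) (u : Cag R) : Prop :=
  exists v a b c : Cag R,
    u * v - 1 = a * zetam R k + b * zetam R k.+1 + c * zetam R k.+2.

Definition ev (R : realType) (g : nat) (sgn : bool) (j : nat) (f : Cag R)
  : CC R :=
  eval2 f ((-1) ^+ sgn * (4 * ((g%:Z) - 2 * (j%:Z)))%:~R) 0.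

(* Main.v *)
Require Import Defs.
From HB Require Import structures.
From mathcomp Require Import all_boot all_order all_algebra.
From mathcomp Require Import reals complex.
From mathcomp Require Import ring zify.
Import Order.TTheory GRing.Theory Num.Theory.
Local Open Scope ring_scope.

Lemma trip1 (R : realType) k : (zeta_triple R k.+1).1.2 = zetam R k.
Proof. by rewrite /zetam /=; case: (zeta_triple R k) => [[a b] c]. Qed.

Lemma trip2 (R : realType) k : (zeta_triple R k.+2).2 = zetam R k.
Proof. by rewrite /zetam /=; case: (zeta_triple R k) => [[a b] c]. Qed.

Lemma zetaS (R : realType) k : zetam R k.+1 = alpha R * zetam R k
  - (if odd k then (16 * k ^ 2)%:R * zetam R k.-1 else 0)
  + gamma R * ((2 * k * (k - 1))%:R * (zeta_triple R k).2).
Proof.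
case: k => [|k]; first by rewrite /zetam /= !mul0r mulr0.
rewrite {1 2}/zetam /= -trip1 /=.
case: (zeta_triple R k) => [[a b] c] /=.
by rewrite [gamma R * _]mulrA [gamma R * _]mulrC -mulrA.
Qed.

Lemma zeta0 (R : realType) : zetam R 0 = 1. Proof. by []. Qed.

Definition z (R : realType) k : {poly CC R} := (zetam R k)`_0.

Lemma zS0 (R : realType) k : z R k.+1 = 'X * z R k
  - (if odd k then (16 * k ^ 2)%:R * z R k.-1 else 0).
Proof.
rewrite /z zetaS coefD coefB !coef0M /gamma coefX mul0r addr0 /alpha coefC /=.
case: (odd k) => //; last by rewrite coef0.
by rewrite coef0M -polyC_natr coefC.
Qed.

Lemma z0 (R : realType) : z R 0 = 1.
Proof. by rewrite /z zeta0 coef1. Qed.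

Lemma z_odd (R : realType) m : z R (m.*2.+1) = 'X * z R m.*2.
Proof. by rewrite zS0 odd_double subr0. Qed.

Lemma z_even (R : realType) m : z R (m.*2.+2) =
  ('X ^+ 2 - (16 * (m.*2.+1) ^ 2)%:R) * z R m.*2.
Proof.
rewrite zS0 /= odd_double /= z_odd; ring.
Qed.

Lemma z_root (R : realType) m i (a : CC R) : (i < m)%N ->
  a ^+ 2 = (16 * (i.*2.+1) ^ 2)%:R -> (z R m.*2).[a] = 0.
Proof.
elim: m => [//|m IH] lt Ha.
rewrite doubleS z_even hornerM.
case: (ltngtP i m) => [lt2|lt2|E].
- by rewrite (IH lt2 Ha) mulr0.
- by rewrite ltnS leqNgt lt2 in lt.
- by rewrite hornerD hornerN hornerXn Ha E -polyC_natr hornerC subrr mul0r.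
Qed.

Lemma z_coprime (R : realType) m (p : {poly CC R}) :
  (forall i, (i < m)%N -> p.[(4 * i.*2.+1)%:R] != 0 /\ p.[- (4 * i.*2.+1)%:R] != 0) ->
  coprimep p (z R m.*2).
Proof.
elim: m => [|m IH] H; first by rewrite z0 coprimep1.
rewrite doubleS z_even coprimepMr IH; last by move=> i lt; apply: H; apply: ltnW.
have [H1 H2] := H m (ltnSn m).
have -> : ('X ^+ 2 - (16 * (m.*2.+1) ^ 2)%:R : {poly CC R}) =
   ('X - ((4 * m.*2.+1)%:R)%:P) * ('X - (- (4 * m.*2.+1)%:R)%:P).
  rewrite !polyCN !polyC_natr !natrM.
  ring.
by rewrite coprimepMr !coprimep_XsubC /root H1 H2.
Qed.

Definition inJ (R : realType) g (f : Cag R) := exists a b c : Cag R,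
  f = a * zetam R g + b * zetam R g.+1 + c * zetam R g.+2.

Lemma inJD R g f h : inJ R g f -> inJ R g h -> inJ R g (f + h).
Proof.
move=> [a [b [c ->]]] [a' [b' [c' ->]]].
exists (a + a'), (b + b'), (c + c'); ring.
Qed.

Lemma inJM R g h f : inJ R g f -> inJ R g (h * f).
Proof.
move=> [a [b [c ->]]]; exists (h * a), (h * b), (h * c); ring.
Qed.

Lemma inJN R g f : inJ R g f -> inJ R g (- f).
Proof. by move=> H; rewrite -mulN1r; apply: inJM. Qed.

Lemma inJ0 R g : inJ R g 0.
Proof. by exists 0, 0, 0; ring. Qed.

Lemma inJg0 R g : inJ R g (zetam R g).
Proof. by exists 1, 0, 0; ring. Qed.
Lemma inJg1 R g : inJ R g (zetam R g.+1).
Proof. by exists 0, 1, 0; ring. Qed.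
Lemma inJg2 R g : inJ R g (zetam R g.+2).
Proof. by exists 0, 0, 1; ring. Qed.

Lemma natr_inv (R : realType) (n : nat) : n != 0%N ->
  (((n%:R : CC R)^-1)%:P)%:P * (n%:R : Cag R) = 1.
Proof.
move=> nz.
rewrite -[n%:R : Cag R]polyC_natr -[n%:R : {poly CC R}]polyC_natr.
by rewrite -!polyCM mulVf ?pnatr_eq0 // .
Qed.

Lemma ring_aux (T : comRingType) d (K cc gm al z0 z2 E : T) :
  K * cc * (gm ^+ d.+3 * z0) = K * (gm ^+ 2 * (gm ^+ d * (al * z2 - E + gm * (cc * z0)))
   - al * gm * (gm ^+ d.+1 * z2) + gm ^+ d.+2 * E).
Proof. rewrite !exprS; ring. Qed.

Lemma nil_aux R g d n : (n + d)%N = g ->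
  [/\ inJ R g (gamma R ^+ d * zetam R n.+2),
      inJ R g (gamma R ^+ d.+1 * zetam R n.+1) &
      inJ R g (gamma R ^+ d.+2 * zetam R n)].
Proof.
elim: d n => [|d IH] n E.
  rewrite addn0 in E; subst n.
  split; rewrite ?expr0 ?mul1r; try apply: inJM; [apply: inJg2|apply: inJg1|apply: inJg0].
have E' : (n.+1 + d)%N = g by rewrite addSn -addnS.
have [A B C] := IH n.+1 E'.
split => //.
set c := (2 * n.+2 * (n.+2 - 1))%N.
have cnz : c != 0%N by rewrite /c.
set E1 := (if odd n.+2 then (16 * n.+2 ^ 2)%:R * zetam R n.+1 else 0).
have HE : inJ R g (gamma R ^+ d.+2 * E1).
  rewrite /E1; case: (odd _); last by rewrite mulr0; apply: inJ0.
  by rewrite mulrCA; apply: inJM.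
have key : gamma R ^+ d.+3 * zetam R n = ((((c%:R : CC R)^-1)%:P)%:P) *
   (gamma R ^+ 2 * (gamma R ^+ d * zetam R n.+3)
    - alpha R * gamma R * (gamma R ^+ d.+1 * zetam R n.+2)
    + gamma R ^+ d.+2 * E1).
  rewrite (zetaS R n.+2) trip2 -/E1.
  set K := ((((c%:R : CC R)^-1)%:P)%:P).
  have HK := @natr_inv R c cnz.
  transitivity ((K * c%:R) * (gamma R ^+ d.+3 * zetam R n)); first by rewrite HK mul1r.
  exact: ring_aux.
rewrite key; apply: inJM; apply: inJD => //; apply: inJD.
  by apply: inJM.
by rewrite -mulNr; apply: inJM.
Qed.

Lemma gamma_nil R g : inJ R g (gamma R ^+ g.+2).
Proof.
have [_ _ H] := @nil_aux R g g 0 (add0n g).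
by rewrite zeta0 mulr1 in H.
Qed.

Lemma ev_eq (R : realType) g sgn j (u : Cag R) :
  ev g sgn j u = (u`_0).[(-1) ^+ sgn * (4 * ((g%:Z) - 2 * (j%:Z)))%:~R].
Proof. by rewrite /ev /eval2 horner_coef0 coef_map_id0 ?horner0. Qed.

Lemma pt_eq (R : realType) m j : (1 <= j <= m)%N ->
  ((4 * (((m.*2.+1)%:Z) - 2 * (j%:Z)))%:~R : CC R) = (4 * (m - j).*2.+1)%:R.
Proof.
move=> /andP[j1 jm].
have -> : (4 * (((m.*2.+1)%:Z) - 2 * (j%:Z)) = ((4 * (m - j).*2.+1)%N)%:Z)%R.
  apply/eqP; rewrite -subr_eq0; apply/eqP. lia.
by rewrite -pmulrn.
Qed.

Lemma sq_sgn (R : realType) (sgn : bool) (x : CC R) : ((-1) ^+ sgn * x) ^+ 2 = x ^+ 2.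
Proof. by case: sgn; rewrite ?expr0 ?mul1r ?expr1 ?mulN1r ?sqrrN. Qed.

Lemma decomp (R : realType) (f : Cag R) : f = (f`_0)%:P + drop_poly 1 f * gamma R.
Proof.
rewrite -{1}(poly_take_drop 1 f) expr1; congr (_ + _).
by apply/polyP => i; rewrite coef_take_poly coefC; case: i.
Qed.

Lemma geom (T : comRingType) (y : T) n : exists W, (1 + y) * W = 1 - (- y) ^+ n.
Proof.
elim: n => [|n [W HW]]; first by exists 0; rewrite expr0 subrr mulr0.
exists (1 - y * W).
rewrite mulrBr mulr1 mulrCA HW exprS; ring.
Qed.

Lemma fin_aux (T : comRingType) (A B C W : T) :
  (1 + A) * W = 1 - B -> (1 + C + A) * W - 1 = - B + W * C.
Proof. move=> H; rewrite -addrA [C + A]addrC addrA mulrDl H; ring. Qed.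

Lemma ring_aux2 (T : comRingType) (U0 U' S Tt Xa Zg Zg1 W1 W2 gm : T) :
  (U0 + U' * gm) * S = (S * U0 + Tt * (Xa * Zg - Zg1))
  + - (Tt * (Xa * (Zg + W1 * gm) - (Zg1 + W2 * gm)))
  + gm * (U' * S + Tt * (Xa * W1 - W2)).
Proof. ring. Qed.

Theorem lemma5p3 (R : realType) (g : nat) (hg : odd g) (u : Cag R) :
  unit_mod_J g u <->
  (forall (sgn : bool) (j : nat), (1 <= j <= (g - 1) %/ 2)%N ->
     ev g sgn j u != 0).
Proof.
have [m ->] : exists m, g = m.*2.+1.
  by exists g./2; rewrite -[g in LHS]odd_double_half hg add1n.
have -> : ((m.*2.+1 - 1) %/ 2 = m)%N by rewrite subn1 /= -muln2 mulnK.
have zd : forall k, (zetam R k)`_0 = z R k by [].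
split.
- move=> [v [a [b [c H]]]] sgn j jr.
  rewrite ev_eq pt_eq //.
  set x := (X in (u`_0).[X]).
  have Hz : (z R m.*2).[x] = 0.
    apply: (@z_root R m (m - j)); first by case/andP: jr => ? ?; lia.
    rewrite /x sq_sgn -natrX; congr (_%:R); rewrite expnMn; lia.
  have Hg : (z R m.*2.+1).[x] = 0 by rewrite z_odd hornerM Hz mulr0.
  have Hg1 : (z R m.*2.+2).[x] = 0 by rewrite z_even hornerM Hz mulr0.
  have Hg2 : (z R m.*2.+3).[x] = 0.
    by rewrite zS0 /= odd_double /= subr0 hornerM Hg1 mulr0.
  have := congr1 (fun f : Cag R => (f`_0).[x]) H.
  rewrite /= coefB !coefD !coef0M coef1 /= !zd.
  rewrite hornerD hornerN !hornerD !hornerM Hg Hg1 Hg2 !mulr0 !addr0 hornerC.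
  move=> E; apply/eqP => E0; move: E; rewrite E0 mul0r sub0r => /eqP.
  by rewrite oppr_eq0 oner_eq0.
- move=> H.
  have Hc : coprimep (u`_0) (z R m.*2).
    apply: z_coprime => i lt.
    have ji : (1 <= m - i <= m)%N by apply/andP; split; lia.
    have mi : (m - (m - i) = i)%N by lia.
    split.
      by have := H false (m - i)%N ji; rewrite ev_eq pt_eq // mi expr0 mul1r.
    by have := H true (m - i)%N ji; rewrite ev_eq pt_eq // mi expr1 mulN1r.
  case/Bezout_eq1_coprimepP: Hc => [[s t] /= Hb].
  set c16 := (16 * (m.*2.+1) ^ 2)%N.
  have HX : 'X * z R m.*2.+1 - z R m.*2.+2 = c16%:R * z R m.*2.
    by rewrite [z R m.*2.+2]zS0 /= odd_double /= opprB addrC subrK.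
  set t' := t * (((c16%:R : CC R)^-1)%:P).
  have Hb' : s * u`_0 + t' * ('X * z R m.*2.+1 - z R m.*2.+2) = 1.
    rewrite HX -[RHS]Hb /t'; congr (_ + _).
    rewrite -mulrA [in X in t * X]mulrA -polyC_natr -polyCM.
    by rewrite mulVf ?pnatr_eq0 // mul1r.
  have Du := decomp R u.
  have Dg : zetam R m.*2.+1 = (z R m.*2.+1)%:P + _ := decomp R _.
  have Dg1 : zetam R m.*2.+2 = (z R m.*2.+2)%:P + _ := decomp R _.
  move: (drop_poly 1 u) (drop_poly 1 (zetam R m.*2.+1)) (drop_poly 1 (zetam R m.*2.+2))
     Du Dg Dg1 => u' w1 w2 Du Dg Dg1.
  move: (u`_0) Hb' Du => u0 Hb' Du.
  pose S : Cag R := s%:P.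
  pose j1 := - (t'%:P * (alpha R * zetam R m.*2.+1 - zetam R m.*2.+2)).
  pose y := gamma R * (u' * S + t'%:P * (alpha R * w1 - w2)).
  have E : u * S = 1 + j1 + y.
    rewrite /j1 /y Dg Dg1 Du -polyC1 -Hb' polyCD !polyCM polyCB polyCM /alpha.
    exact: ring_aux2.
  have Hj1 : inJ R m.*2.+1 j1.
    apply: inJN; apply: inJM; apply: inJD; first by apply: inJM; apply: inJg0.
    by apply: inJN; apply: inJg1.
  have Hy : inJ R m.*2.+1 ((- y) ^+ (m.*2.+3)).
    rewrite exprNn /y exprMn mulrCA mulrC; apply: inJM.
    exact: gamma_nil.
  have [W HW] := @geom _ y (m.*2.+3).
  exists (S * W).
  have [a [b [c Ha]]] : inJ R m.*2.+1 (u * (S * W) - 1).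
    rewrite mulrA E (@fin_aux _ _ _ _ _ HW); apply: inJD; first by apply: inJN.
    by apply: inJM.
  by exists a, b, c.
Qed.
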